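(* Let $X,Y$ be normed spaces over $K$ and $F:X\to Y$ a map. If $F\in B(X,Y)$, then $F$ is topology bounded. Conversely, if $F$ is topology bounded and there is a positive constant $M$ such that $\|F(kx)\|_Y\le M|k|\,\|F(x)\|_Y$ for every scalar $k\neq 0$ and every $x\neq 0$ in $X$, then $F\in B(X,Y)$.
   Context: $K$ is $\mathbb{R}$ or $\mathbb{C}$; normed spaces are nontrivial. Maps need not be linear or continuous. $\|F\|_{B(X,Y)}=\max\left(\sup_{x\neq 0,x\in X}\frac{\|F(x)\|_Y}{\|x\|_X},\ \|F(0)\|_Y\right)\in[0,\infty]$ and $B(X,Y)$ is the set of maps $F:X\to Y$ with $\|F\|_{B(X,Y)}<\infty$. A map $F:X\to Y$ is topology bounded if it maps bounded subsets of $X$ to bounded subsets of $Y$. *)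

(* Defs.v *)
From HB Require Import structures.
From mathcomp Require Import all_boot all_order all_algebra.
From mathcomp Require Import all_classical all_reals all_analysis.
From mathcomp Require Import complex.
Set Implicit Arguments. Unset Strict Implicit. Unset Printing Implicit Defensive.
Import Order.TTheory GRing.Theory Num.Theory.
Import numFieldNormedType.Exports.
Local Open Scope classical_set_scope.
Local Open Scope ring_scope.

(* F \in B(X,Y): the quantity
     max (sup_{x <> 0} |F x| / |x|, |F 0|)
   is finite.  Since |F 0| is always finite and the set of ratios is a set of
   nonnegative numbers, this is literally: the ratios |F x|/|x| (x <> 0) have
   a finite upper bound C. *)
Definition inB (K : numFieldType) (X Y : normedModType K) (F : X -> Y) : Prop :=
  exists C : K, forall x : X, x != 0 -> `|F x| / `|x| <= C.

Definition topology_bounded (K : numFieldType) (X Y : normedModType K)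
  (F : X -> Y) : Prop :=
  forall A : set X, bounded_set A -> bounded_set (F @` A).

Definition theorem_over (K : numFieldType) : Prop :=
  forall (X Y : normedModType K), (exists x : X, x != 0) -> (exists y : Y, y != 0) ->
  forall F : X -> Y,
    (inB F -> topology_bounded F) /\
    (topology_bounded F ->
     (exists M : K, 0 < M /\
        forall (k : K) (x : X), k != 0 -> x != 0 ->
          `|F (k *: x)| <= M * `|k| * `|F x|) ->
     inB F).

(* Main.v *)
Require Import Defs.
From HB Require Import structures.
From mathcomp Require Import all_boot all_order all_algebra.
From mathcomp Require Import all_classical all_reals all_analysis.
From mathcomp Require Import complex.
Local Open Scope ring_scope.
Import Order.TTheory GRing.Theory Num.Theory.
Import numFieldNormedType.Exports.
Local Open Scope classical_set_scope.

Lemma gen_over (K : numFieldType) : theorem_over K.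
Proof.
move=> X Y _ _ F; split.
- move=> [C HC] A [M0 [M0r HA]].
  have HB : forall a, A a -> `|a| <= `|M0| + 1.
    move=> a Aa; apply: (HA (`|M0| + 1)) => //.
    by apply: (le_lt_trans (real_ler_norm M0r)); rewrite ltrDl.
  exists (`|C| * (`|M0| + 1) + `|F 0|); split.
    by apply: ger0_real; rewrite addr_ge0 ?mulr_ge0 ?addr_ge0.
  move=> N HN y [a Aa <-] /=.
  apply: (le_trans _ (ltW HN)).
  have [->|a0] := eqVneq a 0.
    by rewrite lerDr mulr_ge0 ?addr_ge0.
  have h := HC a a0.
  have na : 0 < `|a| by rewrite normr_gt0.
  rewrite ler_pdivrMr // in h.
  apply: (le_trans h); rewrite -[C * `|a|]addr0; apply: lerD => //.
  have p : 0 <= C * `|a| := le_trans (normr_ge0 _) h.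
  rewrite -(ger0_norm p) normrM normr_id.
  by apply: ler_wpM2l => //; apply: HB.
- move=> TB [M [M0 HM]].
  have Hb : bounded_set [set x : X | `|x| <= 1].
    exists 1; split => //; move=> r r1 x /= hx; exact: (le_trans hx (ltW r1)).
  have [N0 [N0r HN]] := TB _ Hb.
  have HN' : forall u : X, `|u| <= 1 -> `|F u| <= `|N0| + 1.
    move=> u hu; apply: (HN (`|N0| + 1) _ (F u)); last by exists u.
    by apply: (le_lt_trans (real_ler_norm N0r)); rewrite ltrDl.
  exists (M * (`|N0| + 1)) => x x0.
  have na : 0 < `|x| by rewrite normr_gt0.
  rewrite ler_pdivrMr //.
  set u := `|x|^-1 *: x.
  have nu : `|u| = 1 by rewrite normrZ normrV ?unitfE ?gt_eqF // normr_id mulVf ?gt_eqF.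
  have u0 : u != 0 by rewrite -normr_eq0 nu oner_eq0.
  have xe : x = `|x| *: u by rewrite /u scalerA mulfV ?gt_eqF ?scale1r.
  rewrite {1}xe.
  apply: (le_trans (HM _ _ _ u0)); first by rewrite gt_eqF.
  rewrite normr_id.
  have -> : M * (`|N0| + 1) * `|x| = M * `|x| * (`|N0| + 1).
    by rewrite -!mulrA (mulrC `|x|).
  apply: ler_wpM2l; first by rewrite mulr_ge0 // ltW.
  by apply: HN'; rewrite nu.
Qed.

Theorem theorem1 :
  (forall R : realType, theorem_over R) /\
  (forall R : realType, theorem_over (R[i])%C).
Proof.
split => R; exact: gen_over.
Qed.
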